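(* Let $A,\tilde A$ be irrational numbers and $\tau,\tilde t\in\mathbb R$. If for all $m,n\in\mathbb Z$ $$An+\tau\le m\iff \tilde An+\tilde t\le m,$$ then $A=\tilde A$ and $\tau=\tilde t$. *)

(* Defs.v *)
From Stdlib Require Import Reals ZArith.
Open Scope R_scope.

Definition irrational (x : R) : Prop :=
  ~ exists (p q : Z), q <> 0%Z /\ x = IZR p / IZR q.

(* Main.v *)
Require Import Defs.
From Stdlib Require Import Reals ZArith Lra Lia.
Open Scope R_scope.

Lemma irr_not_int (x : R) (k : Z) : irrational x -> x <> IZR k.
Proof.
  intros H E; apply H; exists k, 1%Z; split; [lia|].
  rewrite E; simpl; field.
Qed.

Lemma irr_lin (x : R) (a b : Z) : irrational x -> b <> 0%Z ->
  irrational (IZR a + IZR b * x).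
Proof.
  intros H Hb [p [q [Hq E]]]. apply H.
  exists (p - a * q)%Z, (b * q)%Z. split; [lia|].
  assert (IZR b <> 0) by (apply not_0_IZR; auto).
  assert (IZR q <> 0) by (apply not_0_IZR; auto).
  rewrite minus_IZR, !mult_IZR.
  assert (Hx : x = (IZR p / IZR q - IZR a) / IZR b) by (rewrite <- E; field; auto).
  rewrite Hx. field; auto.
Qed.

Lemma descent (A : R) : irrational A -> forall N : nat,
  exists p q : Z, let x := IZR p + IZR q * A in
   0 < x < 1 /\ x <= / INR (S N) /\ irrational x.
Proof.
  intros HA N. induction N as [|N IH].
  - destruct (archimed A) as [H1 H2].
    exists (1 - up A)%Z, 1%Z. cbv zeta.
    rewrite minus_IZR.
    assert (A <> IZR (up A - 1)) by (apply irr_not_int; auto).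
    rewrite minus_IZR in H. simpl in H.
    assert (1 - IZR (up A) + 1 * A <> 0) by lra.
    split; [lra|]. split; [simpl; rewrite Rinv_1; lra|].
    replace (1 - IZR (up A) + 1 * A) with (IZR (1 - up A) + IZR 1 * A)
        by (rewrite minus_IZR; simpl; ring).
    apply irr_lin; auto; lia.
  - destruct IH as [p [q [[H0 H1] [H2 H3]]]].
    set (x := IZR p + IZR q * A) in *.
    destruct (archimed (/ x)) as [U1 U2].
    set (k := (up (/ x) - 1)%Z).
    assert (Hk : IZR k = IZR (up (/x)) - 1) by (unfold k; rewrite minus_IZR; simpl; ring).
    assert (Hinv : 1 < / x).
    { rewrite <- Rinv_1. apply Rinv_lt_contravar; lra. }
    assert (Hkpos : (0 < k)%Z).
    { apply lt_IZR. rewrite Hk. simpl. lra. }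
    assert (Hkx1 : IZR k * x <= 1).
    { assert (IZR k <= / x) by lra.
      apply Rmult_le_compat_r with (r := x) in H; [|lra].
      rewrite Rinv_l in H; lra. }
    assert (Hkx2 : 1 < (IZR k + 1) * x).
    { assert (/ x < IZR k + 1) by lra.
      apply Rmult_lt_compat_r with (r := x) in H; [|lra].
      rewrite Rinv_l in H; lra. }
    assert (Hirr1 : irrational (1 - IZR k * x)).
    { replace (1 - IZR k * x) with (IZR 1 + IZR (- k) * x)
        by (rewrite opp_IZR; simpl; ring).
      apply irr_lin; auto; lia. }
    assert (Hne : 1 - IZR k * x <> 0).
    { intro E. apply (irr_not_int _ 0 Hirr1). simpl. exact E. }
    assert (Hirr2 : irrational (- 1 + (IZR k + 1) * x)).
    { replace (- 1 + (IZR k + 1) * x) with (IZR (-1) + IZR (k + 1) * x)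
        by (rewrite plus_IZR; simpl; ring).
      apply irr_lin; auto; lia. }
    assert (HN : / INR (S N) / 2 <= / INR (S (S N))).
    { rewrite !S_INR. pose proof (pos_INR N).
      apply Rmult_le_reg_r with (r := 2 * (INR N + 1) * (INR N + 1 + 1)). nra.
      field_simplify; lra. }
    destruct (Rle_lt_dec (1 - IZR k * x) (x / 2)) as [Hc|Hc].
    + exists (1 - k * p)%Z, (- k * q)%Z.
      replace (IZR (1 - k * p) + IZR (- k * q) * A) with (1 - IZR k * x)
        by (unfold x; rewrite minus_IZR, !mult_IZR, opp_IZR; simpl; ring).
      split; [lra|]; split; [lra|auto].
    + exists (- 1 + (k + 1) * p)%Z, ((k + 1) * q)%Z.
      replace (IZR (- 1 + (k + 1) * p) + IZR ((k + 1) * q) * A)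
        with (- 1 + (IZR k + 1) * x)
        by (unfold x; rewrite plus_IZR, !mult_IZR, plus_IZR; simpl; ring).
      split; [lra|]; split; [lra|auto].
Qed.

Lemma density (A c d : R) : irrational A -> 0 < d ->
  exists m n : Z, c < IZR m + IZR n * A < c + d.
Proof.
  intros HA Hd.
  destruct (archimed_cor1 d Hd) as [N [HN1 HN2]].
  destruct N as [|N]; [lia|].
  destruct (descent A HA N) as [p [q [[H0 H1] [H2 H3]]]].
  set (x := IZR p + IZR q * A) in *.
  destruct (archimed (c / x)) as [U1 U2].
  set (k := up (c / x)) in *.
  exists (k * p)%Z, (k * q)%Z.
  replace (IZR (k * p) + IZR (k * q) * A) with (IZR k * x)
    by (unfold x; rewrite !mult_IZR; ring).
  assert (c = c / x * x) by (field; lra).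
  split; nra.
Qed.

Lemma close (x y : R) : (forall m : Z, x <= IZR m <-> y <= IZR m) -> y - x <= 1.
Proof.
  intros H. destruct (Rle_lt_dec (y - x) 1) as [h|h]; auto.
  destruct (archimed x) as [U1 U2].
  assert (y <= IZR (up x)) by (apply H; lra). lra.
Qed.

Theorem proposition2 (A At tau tt : R) :
  irrational A -> irrational At ->
  (forall m n : Z, A * IZR n + tau <= IZR m <-> At * IZR n + tt <= IZR m) ->
  A = At /\ tau = tt.
Proof.
  intros HA HAt H.
  assert (Hb : forall n : Z, - 1 <= (At - A) * IZR n + (tt - tau) <= 1).
  { intro n. split.
    - assert (h := close (At * IZR n + tt) (A * IZR n + tau)
        (fun m => iff_sym (H m n))). lra.
    - assert (h := close (A * IZR n + tau) (At * IZR n + tt) (fun m => H m n)). lra. }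
  assert (HAe : A = At).
  { destruct (Req_dec A At) as [e|ne]; auto. exfalso.
    set (d := At - A) in *.
    assert (h0 := Hb 0%Z). simpl in h0. rewrite Rmult_0_r, Rplus_0_l in h0.
    
    destruct (Rlt_or_le 0 d) as [dp|dn].
    + destruct (archimed (3 / d)) as [U1 U2].
      assert (h := Hb (up (3 / d))). 
      assert (3 = 3 / d * d) by (field; lra). nra.
    + assert (dn' : d < 0) by (unfold d in *; lra).
      destruct (archimed (3 / - d)) as [U1 U2].
      assert (h := Hb (- up (3 / - d))%Z). rewrite opp_IZR in h.
      
      assert (3 = 3 / - d * - d) by (field; lra). nra. }
  split; auto. subst At.
  destruct (Rtotal_order tau tt) as [lt|[eq|gt]]; auto; exfalso.
  - destruct (density A tau (tt - tau) HA ltac:(lra)) as [m [n Hmn]].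
    assert (h : A * IZR (- n) + tau <= IZR m) by (rewrite opp_IZR; lra).
    apply H in h. rewrite opp_IZR in h. lra.
  - destruct (density A tt (tau - tt) HA ltac:(lra)) as [m [n Hmn]].
    assert (h : A * IZR (- n) + tt <= IZR m) by (rewrite opp_IZR; lra).
    apply H in h. rewrite opp_IZR in h. lra.
Qed.
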